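(* Let $K$ be a number field. Let $a_1,b_1\in\mathcal{O}_K$ with $b_1\notin\mathcal{O}_K^\times\cup\{0\}$ such that $a_1/b_1$ is a reduced fraction and $\mathfrak{g}_1:=\langle a_1,b_1\rangle$ is a non-principal inseverable ideal. Let $b_2\in\mathcal{O}_K\setminus\{0\}$ be such that $b_2$ is not an associate of $b_1$ (i.e. $b_2\mathcal{O}_K\neq b_1\mathcal{O}_K$). Then there exists $a_2\in\mathcal{O}_K$ such that $a_2/b_2=a_1/b_1$ and $a_2/b_2$ is a reduced fraction if and only if there is an inseverable ideal $\mathfrak{g}_2\neq\mathfrak{g}_1$ with \[\frac{\langle b_1\rangle}{\mathfrak{g}_1}=\frac{\langle b_2\rangle}{\mathfrak{g}_2}.\] In particular, in this case $[\mathfrak{g}_1]=[\mathfrak{g}_2]$ in the class group of $K$.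
   Context: $\langle x_1,\dots,x_n\rangle$ denotes the $\mathcal{O}_K$-ideal generated by $x_1,\dots,x_n$; $[\mathfrak{a}]$ denotes the ideal class of $\mathfrak{a}$. A fraction $a/b$ ($b\ne0$) is reduced if no non-unit of $\mathcal{O}_K$ divides both $a$ and $b$. A nonzero ideal of $\mathcal{O}_K$ is inseverable if the only principal ideal containing it is $\mathcal{O}_K$. *)

(* Defs.v *)
From HB Require Import structures.
From mathcomp Require Import all_boot all_order all_algebra all_field.
Set Implicit Arguments. Unset Strict Implicit. Unset Printing Implicit Defensive.
Import GRing.Theory Num.Theory.
Local Open Scope ring_scope.

Section NumberField.
Variable K : fieldExtType rat.

Definition OK (x : K) : Prop :=
  exists p : {poly int}, p \is monic /\ root (map_poly (fun z : int => z%:~R : K) p) x.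

Definition OK_unit (x : K) : Prop := OK x /\ exists y, OK y /\ x * y = 1.

Definition OK_dvd (d a : K) : Prop := exists k, OK k /\ a = d * k.

Definition reduced_frac (a b : K) : Prop :=
  b != 0 /\ forall d, OK d -> ~ OK_unit d -> OK_dvd d a -> OK_dvd d b -> False.

Definition is_ideal (I : K -> Prop) : Prop :=
  (forall x, I x -> OK x) /\ I 0 /\
  (forall x y, I x -> I y -> I (x + y)) /\
  (forall r x, OK r -> I x -> I (r * x)).

Definition ideal_eq (I J : K -> Prop) : Prop := forall x, I x <-> J x.

Definition gen1 (a : K) : K -> Prop := fun x => exists r, OK r /\ x = r * a.
Definition gen2 (a b : K) : K -> Prop :=
  fun x => exists r s, OK r /\ OK s /\ x = r * a + s * b.

Definition principal (I : K -> Prop) : Prop := exists c, OK c /\ ideal_eq I (gen1 c).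

Definition inseverable (I : K -> Prop) : Prop :=
  is_ideal I /\ (exists x, I x /\ x != 0) /\
  forall c, OK c -> (forall x, I x -> gen1 c x) -> ideal_eq (gen1 c) OK.

(* quotient of (fractional) ideals I / J = I J^{-1} = { x in K | x J ⊆ I } *)
Definition ideal_div (I J : K -> Prop) : K -> Prop :=
  fun x => forall y, J y -> I (x * y).

Definition same_class (I J : K -> Prop) : Prop :=
  exists alpha beta, OK alpha /\ OK beta /\ alpha != 0 /\ beta != 0 /\
    ideal_eq (fun x => exists y, I y /\ x = alpha * y)
             (fun x => exists y, J y /\ x = beta * y).
End NumberField.

(* Main.v *)
Require Import Defs.
From HB Require Import structures.
From mathcomp Require Import all_boot all_order all_algebra all_field.
From mathcomp Require Import ring.
From Stdlib Require Import Classical.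
Import GRing.Theory Num.Theory.
Local Open Scope ring_scope.

Section NF.
Variable K : fieldExtType rat.
Implicit Types x y z : K.

Lemma OKE x : OK x <-> integralOver (intr : int -> K) x.
Proof. split; [case=> p [] *; by exists p | case=> p *; by exists p]. Qed.

Lemma OK_int (n : int) : OK (n%:~R : K).
Proof. apply/OKE; exact: integral_id. Qed.
Lemma OK0 : OK (0 : K). Proof. apply/OKE; exact: integral0. Qed.
Lemma OK1 : OK (1 : K). Proof. apply/OKE; exact: integral1. Qed.
Lemma OK_add {x y} : OK x -> OK y -> OK (x + y).
Proof. move=> /OKE hx /OKE hy; apply/OKE; exact: integral_add. Qed.
Lemma OK_mul {x y} : OK x -> OK y -> OK (x * y).
Proof. move=> /OKE hx /OKE hy; apply/OKE; exact: integral_mul. Qed.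
Lemma OK_opp {x} : OK x -> OK (- x).
Proof. move=> /OKE hx; apply/OKE; exact: integral_opp. Qed.
Lemma OK_sub {x y} : OK x -> OK y -> OK (x - y).
Proof. move=> hx hy; apply: OK_add hx (OK_opp hy). Qed.
Lemma OK_root_monic (p : {poly K}) u : p \is monic -> root p u ->
  (forall i, OK p`_i) -> OK u.
Proof.
move=> mp rp hp; apply/OKE; apply: integral_root_monic mp rp _.
apply/integral_poly => i; exact/OKE.
Qed.
Lemma OK_sum (I : Type) (r : seq I) (P : pred I) (F : I -> K) :
  (forall i, P i -> OK (F i)) -> OK (\sum_(i <- r | P i) F i).
Proof.
move=> h; elim/big_rec: _ => [|i s Pi hs]; [exact: OK0| exact: OK_add (h _ Pi) hs].
Qed.
Lemma OK_exp {x} n : OK x -> OK (x ^+ n).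
Proof. move=> h; elim: n => [|n IH]; [rewrite expr0; exact: OK1|rewrite exprS; exact: OK_mul]. Qed.
End NF.

Section NF.
Variable K : fieldExtType rat.
Implicit Types x y z : K.

Lemma OK_lead_root (p : {poly K}) x : (forall i, OK p`_i) -> p != 0 -> root p x ->
  OK (lead_coef p * x).
Proof.
move=> hp p0 rx; set c := lead_coef p; set n := (size p).-1.
have sp : size p = n.+1 by rewrite /n prednK // size_poly_gt0.
have n0 : (0 < n)%N.
  rewrite lt0n; apply/negP => /eqP n0'; move: sp; rewrite n0' => sp.
  have pC := size1_polyC (eq_leq sp).
  move: rx p0; rewrite pC /root hornerC polyC_eq0 => ->; done.
pose E i := if i == n then 1 else p`_i * c ^+ (n.-1 - i).
pose q := \poly_(i < n.+1) E i.
have sq : size q = n.+1 by rewrite size_poly_eq // /E eqxx oner_neq0.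
apply: (@OK_root_monic K q).
- by rewrite monicE /lead_coef sq /q coef_poly ltnSn /E eqxx.
- rewrite /root /q horner_poly big_ord_recr /= /E eqxx mul1r.
  have -> : \sum_(i < n) (if (i : nat) == n then 1 else p`_i * c ^+ (n.-1 - i)) * (c * x) ^+ i
          = c ^+ n.-1 * \sum_(i < n) p`_i * x ^+ i.
    rewrite mulr_sumr; apply: eq_bigr => i _.
    rewrite (ltn_eqF (ltn_ord i)) exprMn.
    have -> : c ^+ n.-1 = c ^+ (n.-1 - i) * c ^+ i.
      by rewrite -exprD subnK // -ltnS prednK.
    by ring.
  have -> : (c * x) ^+ n = c ^+ n.-1 * (c * x ^+ n).
    by rewrite exprMn -{1}(prednK n0) exprS; ring.
  rewrite -mulrDr; apply/eqP; apply/eqP.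
  move: rx; rewrite /root horner_coef sp big_ord_recr /= => /eqP ->.
  by rewrite /c /lead_coef sp /= mulr0.
- move=> i; rewrite /q coef_poly; case: ifP => _; last exact: OK0.
  rewrite /E; case: eqP => _; first exact: OK1.
  apply: OK_mul; first exact: hp.
  apply: OK_exp; rewrite /c /lead_coef; exact: hp.
Qed.
End NF.

Section NF.
Variable K : fieldExtType rat.
Implicit Types x y z : K.

Lemma OK_bool (b : bool) : OK (b%:R : K).
Proof. case: b; [exact: OK1 | exact: OK0]. Qed.

Lemma OK_divXsubC x (q : {poly K}) :
  (forall i, OK (q * ('X - x%:P))`_i) -> forall i, OK q`_i.
Proof.
move: {2}(size q) (leqnn (size q)) => N; elim: N q => [|N IH] q sq hp i.
  by move: sq; rewrite size_poly_leq0 => /eqP ->; rewrite coef0; exact: OK0.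
have [->|q0] := eqVneq q 0; first by rewrite coef0; exact: OK0.
set m := (size q).-1; set c := lead_coef q; set p := q * ('X - x%:P).
have sq' : size q = m.+1 by rewrite /m prednK // size_poly_gt0.
have lp : lead_coef p = c by rewrite /p lead_coefM lead_coefXsubC mulr1.
have hc : OK c by rewrite -lp; exact: hp.
have p0 : p != 0 by rewrite /p mulf_neq0 // polyXsubC_eq0.
have hcx : OK (c * x).
  rewrite -lp; apply: OK_lead_root => //.
  by rewrite /p rootM root_XsubC eqxx orbT.
have qE : take_poly m q = q - c *: 'X^m.
  apply/polyP => j; rewrite coef_take_poly coefB coefZ coefXn.
  case: ltngtP => hj.
  - by rewrite mulr0 subr0.
  - rewrite mulr0 subr0 nth_default //.
    by rewrite sq'.
  - by rewrite hj mulr1 /c /lead_coef sq' /= subrr.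
have IHq := IH (take_poly m q).
have {}IHq : forall j, OK (take_poly m q)`_j.
  apply: IHq.
    by rewrite (leq_trans (size_take_poly _ _)) // -ltnS -sq'.
  move=> j; rewrite qE mulrBl.
  have -> : c *: 'X^m * ('X - x%:P) = c *: 'X^(m.+1) - (c * x) *: 'X^m.
    by rewrite -!mul_polyC exprSr polyCM; ring.
  rewrite coefB coefB !coefZ !coefXn.
  apply: OK_sub; first exact: hp.
  apply: OK_sub; apply: OK_mul => //; exact: OK_bool.
case: (ltngtP i m) => hi.
- by have := IHq i; rewrite coef_take_poly hi.
- by rewrite nth_default ?sq' //; exact: OK0.
- by rewrite hi; exact: hc.
Qed.
End NF.

Section NF.
Variable K : fieldExtType rat.
Implicit Types x y z : K.

Lemma gcd_closed (P : K -> Prop) (p : {poly int}) :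
  P 0 -> (forall a b, P a -> P b -> P (a + b)) ->
  (forall (z : int) a, P a -> P (z%:~R * a)) ->
  (forall i, P ((p`_i)%:~R)) -> zcontents p = 1 -> P 1.
Proof.
move=> P0 PD PM Pp cp.
have H : forall n, P ((\big[gcdn/0%N]_(i < n) absz p`_i)%:R).
  elim=> [|n IH]; first by rewrite big_ord0.
  rewrite big_ord_recr /=.
  set G := \big[gcdn/0%N]_(i < n) absz p`_i.
  have [u [v e]] := Bezoutz (G%:Z) (p`_n).
  have -> : ((gcdn G (absz p`_n))%:R : K) = ((gcdz G%:Z p`_n)%:~R : K).
    by rewrite /gcdz absz_nat.
  rewrite -e rmorphD !rmorphM /=; apply: PD; apply: PM => //; exact: IH.
have := H (size p); congr P.
move: cp; rewrite /zcontents => /(congr1 absz); rewrite abszM absz_nat /=.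
by move/eqP; rewrite muln_eq1 => /andP[_ /eqP ->].
Qed.

Lemma algebraic_int x : exists p : {poly int},
  zcontents p = 1 /\ root (map_poly (intr : int -> K) p) x.
Proof.
have [/polyOver1P[q Dq] mq] := (minPolyOver 1 x, monic_minPoly 1 x).
have rq := root_minPoly 1 x; rewrite Dq in rq mq.
have [z [a a0 qE]] := rat_poly_scale q.
have z0 : z != 0.
  apply/eqP => z0; move: mq; rewrite qE z0 map_poly0 scaler0 map_poly0.
  by move/monic_neq0; rewrite eqxx.
exists (zprimitive z); split; first by rewrite zcontents_primitive z0.
have KintE (c : int) : (c%:~R : K) = in_alg K (c%:~R). by rewrite /= alg_num_field ratr_int.
have Kint0 (c : int) : c != 0 -> (c%:~R : K) != 0.
  by move=> c0; rewrite KintE fmorph_eq0 intr_eq0.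
have ez : map_poly (intr : int -> K) z = map_poly (in_alg K) (a%:~R *: q).
  rewrite qE scalerA mulfV ?intr_eq0 // scale1r -map_poly_comp.
  by apply: eq_map_poly => n /=; rewrite alg_num_field ratr_int.
have rz : root (map_poly (intr : int -> K) z) x.
  by rewrite ez map_polyZ /root hornerZ (eqP rq) mulr0.
move: rz; rewrite {1}(zpolyEprim z) map_polyZ /root hornerZ mulf_eq0.
by rewrite (negbTE (Kint0 _ _)) // zcontents_eq0.
Qed.
End NF.

Section NF.
Variable K : fieldExtType rat.
Implicit Types x y z : K.

Definition ispan (S : K -> Prop) (w : K) : Prop :=
  forall P : K -> Prop, P 0 -> (forall a b, P a -> P b -> P (a + b)) ->
  (forall r a, OK r -> P a -> P (r * a)) -> (forall s, S s -> P s) -> P w.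

Lemma ispan_gen {S s} : S s -> ispan S s.
Proof. move=> Ss P P0 PD PM PS; exact: (PS s Ss). Qed.
Lemma ispan0 S : ispan S 0.
Proof. by move=> P. Qed.
Lemma ispan_add {S a b} : ispan S a -> ispan S b -> ispan S (a + b).
Proof. move=> ha hb P P0 PD PM PS; apply: (PD); [exact: (ha P P0 PD PM PS)|exact: (hb P P0 PD PM PS)]. Qed.
Lemma ispan_mul {S r a} : OK r -> ispan S a -> ispan S (r * a).
Proof. move=> hr ha P P0 PD PM PS; apply: (PM) => //; exact: (ha P P0 PD PM PS). Qed.
Lemma ispan_opp {S a} : ispan S a -> ispan S (- a).
Proof. by move=> h; rewrite -mulN1r; apply: ispan_mul => //; apply: (OK_int K (-1)). Qed.
Lemma ispan_sub {S a b} : ispan S a -> ispan S b -> ispan S (a - b).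
Proof. by move=> ha hb; apply: ispan_add ha (ispan_opp hb). Qed.
Lemma ispan_mono {S S' w} : ispan S w -> (forall s, S s -> ispan S' s) -> ispan S' w.
Proof.
move=> h hS; apply: (h (ispan S')).
- exact: (ispan0 S').
- by move=> a b ha hb; exact: (ispan_add ha hb).
- by move=> r a hr ha; exact: (ispan_mul hr ha).
- exact: hS.
Qed.
Lemma ispan_OK {S w} : ispan S w -> (forall s, S s -> OK s) -> OK w.
Proof.
move=> h hS; apply: (h (@OK K)) => //.
- exact: OK0.
- by move=> a b; apply: OK_add.
- by move=> a b; apply: OK_mul.
Qed.

Definition prodS (S T : K -> Prop) (z : K) := exists a b, S a /\ T b /\ z = a * b.
Definition Dx x (t : K) := OK t /\ OK (t * x).
Definition Mx x (m : K) := exists a b, OK a /\ OK b /\ m = a + b * x.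

Lemma inv1 x : ispan (prodS (Dx x) (Mx x)) 1.
Proof.
have [p [cp rp]] := algebraic_int K x.
set P := map_poly (intr : int -> K) p in rp.
have /factor_theorem [q Pq] := rp.
have PE k : P`_k = (if k == 0%N then 0 else q`_k.-1) - q`_k * x.
  by rewrite Pq mulrBr coefB coefMX coefMC.
have hP k : OK P`_k by rewrite /P coef_map; exact: OK_int.
have hq : forall k, OK q`_k.
  apply: (@OK_divXsubC K x) => k; rewrite -Pq; exact: hP.
have Dq k : Dx x q`_k.
  split => //; have -> : q`_k * x = (if k == 0%N then 0 else q`_k.-1) - P`_k.
    by rewrite PE; ring.
  apply: OK_sub => //; case: (k == 0)%N; [exact: OK0|exact: hq].
have M1 : Mx x 1 by exists 1, 0; split; [exact: OK1|split; [exact: OK0|ring]].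
have MN : Mx x (- x) by exists 0, (-1); split; [exact: OK0|split; [exact: (OK_int K (-1))|ring]].
have sP k : ispan (prodS (Dx x) (Mx x)) P`_k.
  rewrite PE; case: (k == 0)%N.
    rewrite sub0r -mulrN; apply: ispan_gen; exists q`_k, (- x); split => //.
  rewrite -mulrN; apply: ispan_add; apply: ispan_gen.
    by exists q`_k.-1, 1; rewrite mulr1; split.
  by exists q`_k, (- x); split.
apply: (@gcd_closed K (ispan (prodS (Dx x) (Mx x))) p).
- exact: ispan0.
- move=> a b ha hb; exact: (ispan_add ha hb).
- move=> c a ha; exact: (ispan_mul (OK_int K c) ha).
- by move=> i; have := sP i; rewrite /P coef_map.
- exact: cp.
Qed.
End NF.
Arguments ispan {K}. Arguments ispan_gen {K S s}. Arguments ispan0 {K}.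
Arguments ispan_add {K S a b}. Arguments ispan_mul {K S r a}. Arguments ispan_opp {K S a}.
Arguments ispan_sub {K S a b}. Arguments ispan_mono {K S S' w}. Arguments ispan_OK {K S w}.
Arguments prodS {K}. Arguments Dx {K}. Arguments Mx {K}.

Import VectorInternalTheory.

Section NF.
Variable K : fieldExtType rat.
Implicit Types x y z : K.
Local Notation n := (dim K).

Definition mulv (w : K) (v : 'rV[rat]_n) : 'rV[rat]_n := v2r (w * r2v v).
Lemma mulv_semilinear w : semilinear (mulv w).
Proof.
split=> [a u|u v]; rewrite /mulv.
  by rewrite linearZ /= -scalerAr linearZ.
by rewrite linearD /= mulrDr linearD.
Qed.
HB.instance Definition _ w :=
  GRing.isSemilinear.Build rat 'rV[rat]_n 'rV[rat]_n _ (mulv w) (mulv_semilinear w).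

Definition Mxw (w : K) : 'M[rat]_n := lin1_mx (mulv w).

Lemma MxE w u : v2r (w * u) = v2r u *m Mxw w.
Proof. by rewrite /Mxw mul_rV_lin1 /= /mulv v2rK. Qed.

Lemma Mx_ext (A B : 'M[rat]_n) : (forall u : K, v2r u *m A = v2r u *m B) -> A = B.
Proof.
move=> h; apply/row_matrixP => i; rewrite !rowE.
by rewrite -(r2vK (delta_mx 0 i)) h.
Qed.

Lemma Mx_mul w w' : Mxw (w * w') = Mxw w' *m Mxw w.
Proof. by apply: Mx_ext => u; rewrite -MxE mulmxA -MxE -MxE mulrA. Qed.
Lemma Mx_add w w' : Mxw (w + w') = Mxw w + Mxw w'.
Proof. by apply: Mx_ext => u; rewrite mulmxDr -!MxE mulrDl linearD. Qed.
Lemma Mx_scale (a : rat) w : Mxw (a *: w) = a *: Mxw w.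
Proof. by apply: Mx_ext => u; rewrite -scalemxAr -!MxE -scalerAl linearZ. Qed.
Lemma Mx0 : Mxw 0 = 0.
Proof. by apply: Mx_ext => u; rewrite mulmx0 -MxE mul0r linear0. Qed.
Lemma Mx1 : Mxw 1 = 1%:M.
Proof. by apply: Mx_ext => u; rewrite mulmx1 -MxE mul1r. Qed.

Definition Tr (w : K) : rat := \tr (Mxw w).
Lemma TrD w w' : Tr (w + w') = Tr w + Tr w'.
Proof. by rewrite /Tr Mx_add mxtraceD. Qed.
Lemma TrZ (a : rat) w : Tr (a *: w) = a * Tr w.
Proof. by rewrite /Tr Mx_scale mxtraceZ. Qed.
Lemma Tr1 : Tr 1 = n%:R.
Proof. by rewrite /Tr Mx1 mxtrace1. Qed.
Lemma n_gt0 : (0 < n)%N.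
Proof. by rewrite -dimvf adim_gt0. Qed.


Lemma Mx_int (c : int) : Mxw (c%:~R) = (c%:~R : rat)%:M.
Proof.
have -> : (c%:~R : K) = (c%:~R : rat) *: 1 by rewrite alg_num_field ratr_int.
by rewrite Mx_scale Mx1 scalemx1.
Qed.

Lemma Tr_int w : OK w -> Tr w \is a Num.int.
Proof.
case=> p [mp rp].
set B := map_mx (ratr : rat -> algC) (Mxw w).
have [r Er] := closed_field_poly_normal (char_poly B).
rewrite (monicP (char_poly_monic B)) scale1r in Er.
have Ar : forall z : algC, z \in r -> z \in Aint.
  move=> z zr.
  have : eigenvalue B z by rewrite eigenvalue_root_char Er root_prod_XsubC.
  case/eigenvalueP => v vB v0.
  have key : forall q : {poly int}, v *m map_mx ratr (Mxw (map_poly intr q).[w])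
                   = (map_poly (intr : int -> algC) q).[z] *: v.
    elim/poly_ind => [|q c IH].
      by rewrite !map_poly0 !horner0 Mx0 map_mx0 mulmx0 scale0r.
    rewrite !rmorphD !rmorphM /= !map_polyX !map_polyC /= !hornerE.
    rewrite Mx_add Mx_mul map_mxD mulmxDr map_mxM mulmxA vB -scalemxAl IH.
    rewrite Mx_int map_scalar_mx /= ratr_int mul_mx_scalar scalerA scalerDl.
    by rewrite mulrC.
  have := key p; rewrite (rootP rp) Mx0 map_mx0 mulmx0 => /esym/eqP.
  rewrite scaler_eq0 (negbTE v0) orbF => rz.
  apply: (@root_monic_Aint (map_poly intr p)) => //.
    by rewrite monicE lead_coef_map_eq; rewrite (monicP mp) //= ?rmorph1 ?oner_eq0.
  apply/(polyOverP) => i; rewrite coef_map; exact: intr_int.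
have sr : size r = n.
  have := size_char_poly B; rewrite Er size_prod_XsubC.
  by case.
have trB : \tr B = \sum_(z <- r) (z : algC).
  have h := char_poly_trace B n_gt0; rewrite Er in h.
  have e : n.-1 = (size r).-1 by rewrite sr.
  rewrite e coefPn_prod_XsubC in h; last by rewrite sr -lt0n n_gt0.
  by move/oppr_inj: h.
have : ratr (Tr w) \in Aint.
  rewrite /Tr -trace_map_mx -/B trB. rewrite big_seq; apply/rpred_sum => z; exact: Ar.
move=> /(Cint_rat_Aint (Crat_rat _)) /intrP [m hm].
apply/intrP; exists m; apply: (fmorph_inj (ratr : rat -> algC)).
first [by rewrite rmorph_int | by rewrite hm rmorph_int | by rewrite hm; symmetry; apply: ratr_int | (transitivity (m%:~R : algC); [exact: hm | by rewrite rmorph_int])].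
Qed.
End NF.

Import VectorInternalTheory.
Arguments Tr {K}. Arguments Mxw {K}.

Section NF.
Variable K : fieldExtType rat.
Implicit Types x y z : K.
Local Notation n := (dim K).

Definition bas (i : 'I_n) : K := r2v (delta_mx 0 i).

Lemma coordE u : u = \sum_i (v2r u) 0 i *: bas i.
Proof.
rewrite -{1}(v2rK u) {1}(row_sum_delta (v2r u)) linear_sum.
by apply: eq_bigr => i _; rewrite linearZ.
Qed.

Lemma Kint0 (c : int) : c != 0 -> (c%:~R : K) != 0.
Proof.
move=> c0; have -> : (c%:~R : K) = in_alg K (c%:~R) by rewrite /= alg_num_field ratr_int.
by rewrite fmorph_eq0 intr_eq0.
Qed.

Lemma scale_int y : exists m : int, m != 0 /\ OK (m%:~R * y).
Proof.
have [p [cp rp]] := algebraic_int K y.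
have p0 : p != 0 by apply/eqP => p0; move: cp; rewrite p0 zcontents0.
have lp0 : (lead_coef p)%:~R != 0 :> K by apply: Kint0; rewrite lead_coef_eq0.
exists (lead_coef p); split; first by rewrite lead_coef_eq0.
have := @OK_lead_root K (map_poly intr p) y.
rewrite lead_coef_map_eq //; apply.
- by move=> i; rewrite coef_map; apply: OK_int.
- by rewrite -lead_coef_eq0 lead_coef_map_eq.
- exact: rp.
Qed.

Lemma common_scale : exists M : int, M != 0 /\ forall i, OK (M%:~R * bas i).
Proof.
suff : forall s : seq 'I_n, exists M : int, M != 0 /\ forall i, i \in s -> OK (M%:~R * bas i).
  by case/(_ (enum 'I_n)) => M [M0 h]; exists M; split => // i; apply: h; rewrite mem_enum.
elim=> [|j s [M [M0 h]]]; first by exists 1; split.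
have [m [m0 hm]] := scale_int (bas j).
exists (M * m); split; first by rewrite mulf_neq0.
move=> i; rewrite inE => /orP [/eqP -> | /h hi].
  rewrite rmorphM /= -mulrA; apply: OK_mul => //; exact: OK_int.
have -> : (M * m)%:~R * bas i = m%:~R * (M%:~R * bas i) :> K by rewrite rmorphM /=; ring.
apply: OK_mul => //; exact: OK_int.
Qed.

Lemma Tr0 : Tr (0 : K) = 0.
Proof. by rewrite /Tr Mx0 mxtrace0. Qed.
Lemma Tr_sum (I : finType) (f : I -> K) : Tr (\sum_i f i) = \sum_i Tr (f i).
Proof. exact: (big_morph _ (@TrD K) Tr0). Qed.

Lemma intZ (c : int) (u : K) : (c%:~R : rat) *: u = (c%:~R : K) * u.
Proof. by rewrite -mulr_algl alg_num_field ratr_int. Qed.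

Theorem FIN : exists (e : 'I_n -> K) (D : int), D != 0 /\ (forall i, OK (e i)) /\
  forall w, OK w -> exists s : 'I_n -> int, D%:~R * w = \sum_i (s i)%:~R * e i.
Proof.
have [M [M0 hM]] := common_scale.
pose e i := (M%:~R : rat) *: bas i.
have he : forall i, OK (e i) by move=> i; rewrite /e intZ.
have wE : forall w, (M%:~R : rat) *: w = \sum_i (v2r w) 0 i *: e i.
  move=> w; rewrite {1}(coordE w) scaler_sumr; apply: eq_bigr => i _.
  by rewrite /e !scalerA mulrC.
pose G : 'M[rat]_n := \matrix_(i, j) Tr (e i * e j).
have Gint : forall i j, G i j \is a Num.int.
  by move=> i j; rewrite mxE; apply: Tr_int; apply: OK_mul.
pose GZ := map_mx (@Num.floor rat) G.
have GE : G = map_mx intr GZ.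
  apply/matrixP => i j; have := Gint i j; rewrite !mxE => hG.
  by rewrite floorK.
have M0r : (M%:~R : rat) != 0 by rewrite intr_eq0.
have detG : \det GZ != 0.
  apply/negP => /eqP d0.
  have : \det G == 0 by rewrite GE det_map_mx d0 rmorph0.
  case/det0P => v v0 vG.
  pose y := \sum_i v 0 i *: e i.
  have yE : y = (M%:~R : rat) *: r2v v.
    rewrite /y; have := coordE (r2v v); rewrite r2vK => ->.
    rewrite scaler_sumr; apply: eq_bigr => i _.
    by rewrite /e !scalerA mulrC.
  have rv0 : r2v v != 0.
    by apply: contra v0 => /eqP h; rewrite -(r2vK v) h linear0.
  have y0 : y != 0 by rewrite yE scaler_eq0 negb_or M0r.
  have Ty : forall j, Tr (y * e j) = 0.
    move=> j; have := congr1 (fun A : 'rV[rat]_n => A 0 j) vG; rewrite !mxE => <-.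
    rewrite /y mulr_suml Tr_sum; apply: eq_bigr => i _.
    by rewrite -scalerAl TrZ mxE.
  have Tyz : forall z, Tr (y * z) = 0.
    move=> z; rewrite (coordE z) mulr_sumr Tr_sum big1 // => j _.
    have := Ty j; rewrite /e -scalerAr -scalerAr !TrZ => /eqP.
    rewrite mulf_eq0 (negbTE M0r) /= => /eqP ->; by rewrite mulr0.
  have := Tyz y^-1; rewrite mulfV // Tr1 => /eqP.
  by rewrite pnatr_eq0; move/eqP; apply/eqP; rewrite -lt0n n_gt0.
exists e, (\det GZ * M); split; first by rewrite mulf_neq0.
split => // w hw.
set q := v2r w.
have qG : forall j, (q *m G) 0 j = Tr ((M%:~R : rat) *: w * e j).
  move=> j; rewrite !mxE wE mulr_suml Tr_sum; apply: eq_bigr => i _.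
  by rewrite -scalerAl TrZ mxE.
have qGint : forall j, (q *m G) 0 j \is a Num.int.
  move=> j; rewrite qG; apply: Tr_int; apply: OK_mul => //.
  by rewrite intZ; apply: OK_mul => //; apply: OK_int.
pose sZ := map_mx (@Num.floor rat) (q *m G).
have sE : q *m G = map_mx intr sZ.
  apply/matrixP => i j; have := qGint j; rewrite (ord1 i) !mxE => hG.
  by rewrite floorK.
have key : (\det G) *: q = map_mx intr (sZ *m \adj GZ).
  by rewrite map_mxM -sE map_mx_adj -GE -mulmxA mul_mx_adj mul_mx_scalar.
exists (fun i => (sZ *m \adj GZ) 0 i).
have -> : \sum_i ((sZ *m \adj GZ) 0 i)%:~R * e i = \sum_i ((\det G) * q 0 i) *: e i.
  apply: eq_bigr => i _; rewrite -intZ; congr (_ *: _).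
  by have := congr1 (fun A : 'rV[rat]_n => A 0 i) key; rewrite !mxE => ->.
rewrite -intZ -[RHS]/(\sum_i _) .
under eq_bigr => i _ do rewrite -scalerA.
rewrite -scaler_sumr -wE scalerA GE det_map_mx rmorphM.
by [].
Qed.
End NF.

Import VectorInternalTheory.

Section NF.
Variable K : fieldExtType rat.
Implicit Types x y z : K.
Local Notation n := (dim K).

Lemma cfilter (P : K -> Prop) (s : seq K) :
  exists s' : seq K, (forall z, z \in s' -> P z) /\ (forall z, z \in s -> P z -> z \in s').
Proof.
elim: s => [|a s [s' [h1 h2]]]; first by exists [::].
case: (classic (P a)) => Pa.
  exists (a :: s'); split.
    by move=> z; rewrite inE => /orP [/eqP -> | /h1].
  move=> z; rewrite inE => /orP [/eqP -> | /h2 hz] Pz; first by rewrite mem_head.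
  by rewrite inE (hz Pz) orbT.
exists s'; split => // z; rewrite inE => /orP [/eqP -> //| /h2 //].
Qed.

Lemma ideal_int (c : K -> Prop) : is_ideal c -> (exists y, c y /\ y != 0) ->
  exists m : int, m != 0 /\ c (m%:~R).
Proof.
move=> [cOK [c0 [cD cM]]] [y [cy y0]].
have [m [m0 hm]] := scale_int K (y^-1).
exists m; split => //.
have -> : (m%:~R : K) = (m%:~R * y^-1) * y by rewrite -mulrA mulVf // mulr1.
exact: cM.
Qed.

Lemma fg (c : K -> Prop) : is_ideal c -> (exists y, c y /\ y != 0) ->
  exists l : seq K, (forall s, s \in l -> c s) /\ (forall w, c w -> ispan (fun s => s \in l) w).
Proof.
move=> ci cnz; have [m [m0 cm]] := ideal_int c ci cnz.
have [cOK [c0 [cD cM]]] := ci.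
have [e [D [D0 [he hD]]]] := FIN K.
set d := D * m.
have d0 : d != 0 by rewrite mulf_neq0.
pose rep (t : {ffun 'I_n -> 'I_(absz d)}) : K :=
  (D%:~R)^-1 * \sum_i ((t i : nat)%:R) * e i.
pose R := [seq rep t | t <- enum {ffun 'I_n -> 'I_(absz d)}].
have repP : forall w, OK w -> exists2 r, r \in R & exists2 k, OK k & w = r + m%:~R * k.
  move=> w hw; have [s hs] := hD w hw.
  have tP : forall i, (absz ((s i) %% d)%Z < absz d)%N.
    move=> i; have h1 := modz_ge0 (s i) d0; have h2 := ltz_mod (s i) d0.
    by rewrite -ltz_nat gez0_abs // abszE.
  pose t := [ffun i => Ordinal (tP i)].
  exists (rep t); first by apply: map_f; rewrite mem_enum.
  exists (\sum_i ((s i %/ d)%Z)%:~R * e i).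
    by apply: OK_sum => i _; apply: OK_mul => //; apply: OK_int.
  have DK0 : (D%:~R : K) != 0 by apply: Kint0.
  apply: (mulfI DK0); rewrite hs mulrDr /rep mulrA mulfV // mul1r.
  rewrite mulr_sumr mulr_sumr -big_split /=; apply: eq_bigr => i _.
  rewrite ffunE /=.
  have -> : ((absz (s i %% d)%Z)%:R : K) = ((s i %% d)%Z)%:~R.
    by rewrite -[LHS]/(((absz (s i %% d)%Z)%:Z)%:~R) gez0_abs // modz_ge0.
  rewrite {1}(divz_eq (s i) d) /d rmorphD !rmorphM /=; ring.
have [s' [h1 h2]] := cfilter c R.
exists (m%:~R :: s'); split.
  by move=> z; rewrite inE => /orP [/eqP -> | /h1].
move=> w cw; have [r rR [k hk wE]] := repP w (cOK _ cw).
have cr : c r.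
  have -> : r = w + (- k) * m%:~R by rewrite wE; ring.
  apply: cD => //; apply: cM => //; exact: OK_opp.
rewrite wE; apply: ispan_add.
  by apply: ispan_gen; rewrite inE (h2 _ rR cr) orbT.
by rewrite mulrC; apply: ispan_mul => //; apply: ispan_gen; rewrite mem_head.
Qed.
End NF.

Section NF.
Variable K : fieldExtType rat.
Implicit Types x y z : K.

Definition Inv (S : K -> Prop) := exists T : K -> Prop,
  (forall a b, S a -> T b -> OK (a * b)) /\ ispan (prodS S T) 1.

Lemma span_mul (S1 S2 S3 : K -> Prop) z1 z2 :
  (forall s1 s2, S1 s1 -> S2 s2 -> ispan S3 (s1 * s2)) ->
  ispan S1 z1 -> ispan S2 z2 -> ispan S3 (z1 * z2).
Proof.
move=> h h1 h2.
apply: (h1 (fun z => ispan S3 (z * z2))).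
- by rewrite mul0r; apply: ispan0.
- by move=> a b ha hb; rewrite mulrDl; exact: ispan_add ha hb.
- by move=> r a hr ha; rewrite -mulrA; exact: ispan_mul hr ha.
- move=> s1 Ss1; apply: (h2 (fun z => ispan S3 (s1 * z))).
  + by rewrite mulr0; apply: ispan0.
  + by move=> a b ha hb; rewrite mulrDr; exact: ispan_add ha hb.
  + by move=> r a hr ha; rewrite mulrCA; exact: ispan_mul hr ha.
  + by move=> s2 Ss2; exact: h.
Qed.

Lemma Inv_span (S S' : K -> Prop) : Inv S' -> (forall s, S s -> ispan S' s) ->
  (forall s, S' s -> ispan S s) -> Inv S.
Proof.
case=> T [hT h1] hSS' hS'S; exists T; split.
  move=> a b Sa Tb; apply: (hSS' a Sa (fun z => OK (z * b))).
  - by rewrite mul0r; exact: OK0.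
  - by move=> x y hx hy; rewrite mulrDl; exact: OK_add.
  - by move=> r x hr hx; rewrite -mulrA; exact: OK_mul.
  - by move=> s Ss; exact: hT.
apply: (ispan_mono h1) => z [a [b [S'a [Tb ->]]]].
apply: (hS'S a S'a (fun z => ispan (prodS S T) (z * b))).
- by rewrite mul0r; apply: ispan0.
- by move=> x y hx hy; rewrite mulrDl; exact: ispan_add hx hy.
- by move=> r x hr hx; rewrite -mulrA; exact: ispan_mul hr hx.
- by move=> s Ss; apply: ispan_gen; exists s, b.
Qed.

Lemma Inv_eq (S S' : K -> Prop) : Inv S' -> (forall z, S z <-> S' z) -> Inv S.
Proof.
move=> h e; apply: (Inv_span S S' h) => s hs; apply: ispan_gen; exact/e.
Qed.

Lemma Prufer (A B C : K -> Prop) :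
  Inv (fun z => A z \/ B z) -> Inv (fun z => B z \/ C z) -> Inv (fun z => C z \/ A z) ->
  Inv (fun z => A z \/ B z \/ C z).
Proof.
case=> U [hU iU] [V [hV iV]] [W [hW iW]].
pose T z := exists x y u v w, ((A x /\ B y) \/ (B x /\ C y) \/ (C x /\ A y)) /\
   U u /\ V v /\ W w /\ z = x * y * (u * v * w).
have tri : forall al be ga u v w, (A al \/ B al) -> (B be \/ C be) -> (C ga \/ A ga) ->
    U u -> V v -> W w -> OK (al * u * (be * v) * (ga * w)).
  move=> al be ga u v w h1 h2 h3 Uu Vv Ww.
  apply: OK_mul; [apply: OK_mul|]; [exact: hU|exact: hV|exact: hW].
exists T; split.
  move=> s t Hs [x [y [u [v [w [Hxy [Uu [Vv [Ww ->]]]]]]]]].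
  case: Hs => [As|[Bs|Cs]]; case: Hxy => [[Ax By]|[[Bx Cy]|[Cx Ay]]].
  - have -> : s * (x * y * (u * v * w)) = s * u * (y * v) * (x * w) by ring.
    by apply: tri; auto.
  - have -> : s * (x * y * (u * v * w)) = x * u * (y * v) * (s * w) by ring.
    by apply: tri; auto.
  - have -> : s * (x * y * (u * v * w)) = s * u * (x * v) * (y * w) by ring.
    by apply: tri; auto.
  - have -> : s * (x * y * (u * v * w)) = s * u * (y * v) * (x * w) by ring.
    by apply: tri; auto.
  - have -> : s * (x * y * (u * v * w)) = s * u * (x * v) * (y * w) by ring.
    by apply: tri; auto.
  - have -> : s * (x * y * (u * v * w)) = s * u * (x * v) * (y * w) by ring.
    by apply: tri; auto.
  - have -> : s * (x * y * (u * v * w)) = x * u * (y * v) * (s * w) by ring.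
    by apply: tri; auto.
  - have -> : s * (x * y * (u * v * w)) = x * u * (y * v) * (s * w) by ring.
    by apply: tri; auto.
  - have -> : s * (x * y * (u * v * w)) = y * u * (s * v) * (x * w) by ring.
    by apply: tri; auto.
pose Y z := exists al u be v, (A al \/ B al) /\ U u /\ (B be \/ C be) /\ V v /\
   z = al * u * (be * v).
pose X z := exists al u be v ga w, (A al \/ B al) /\ U u /\ (B be \/ C be) /\ V v /\
   (C ga \/ A ga) /\ W w /\ z = al * u * (be * v) * (ga * w).
have iY : ispan Y (1 * 1).
  apply: (@span_mul _ _ Y 1 1 _ iU iV) => _ _ [al [u [h1 [Uu ->]]]] [be [v [h2 [Vv ->]]]].
  by apply: ispan_gen; exists al, u, be, v.
have iX : ispan X (1 * 1 * 1).
  apply: (@span_mul _ _ X (1 * 1) 1 _ iY iW) => _ _ [al [u [be [v [h1 [Uu [h2 [Vv ->]]]]]]]] [ga [w [h3 [Ww ->]]]].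
  by apply: ispan_gen; exists al, u, be, v, ga, w.
rewrite !mul1r in iX; apply: (ispan_mono iX).
move=> _ [al [u [be [v [ga [w [h1 [Uu [h2 [Vv [h3 [Ww ->]]]]]]]]]]]].
apply: ispan_gen.
case: h1 => [Aal|Bal]; case: h2 => [Bbe|Cbe].
- exists ga, (al * be * (u * v * w)); split; first by case: h3; auto.
  split; last by ring.
  by exists al, be, u, v, w; split; auto.
- exists ga, (be * al * (u * v * w)); split; first by case: h3; auto.
  split; last by ring.
  by exists be, al, u, v, w; split; auto.
- case: h3 => [Cga|Aga].
  + exists be, (al * ga * (u * v * w)); split; first by auto.
    split; last by ring.
    by exists al, ga, u, v, w; split; auto.
  + exists be, (ga * al * (u * v * w)); split; first by auto.
    split; last by ring.
    by exists ga, al, u, v, w; split; auto.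
- exists ga, (al * be * (u * v * w)); split; first by case: h3; auto.
  split; last by ring.
  by exists al, be, u, v, w; split; auto.
Qed.

Lemma Inv_pair a b : a != 0 -> Inv (fun z => z = a \/ z = b).
Proof.
move=> a0; set x := b / a.
pose T z := exists t, Dx x t /\ z = t / a.
have e1 : forall t, a * (t / a) = t by move=> t; rewrite mulrCA mulfV ?mulr1.
have e2 : forall t, b * (t / a) = t * x by move=> t; rewrite /x; ring.
exists T; split.
  move=> s _ [->|->] [t [[ht htx] ->]]; first by rewrite e1.
  by rewrite e2.
apply: (ispan_mono (inv1 K x)) => _ [t [m [Dt [[al [be [hal [hbe ->]]]] ->]]]].
have -> : t * (al + be * x) = al * (a * (t / a)) + be * (b * (t / a)).
  by rewrite e1 e2; ring.
have hT : T (t / a) by exists t.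
apply: ispan_add; apply: ispan_mul => //; apply: ispan_gen.
  by exists a, (t / a); split; [left|split].
by exists b, (t / a); split; [right|split].
Qed.

Lemma Inv_list (l : seq K) : has (fun z => z != 0) l -> Inv (fun z => z \in l).
Proof.
move: {2}(size l) (leqnn (size l)) => N; elim: N l => [|N IH] l.
  by rewrite leqn0 => /nilP ->.
case: l => [|b [|c r]] //= sl.
- rewrite orbF => b0; apply: (Inv_eq _ _ (Inv_pair b b b0)) => z.
  by rewrite inE; split => [/eqP ->|[|] ->]; auto.
- have IHl : forall l, (size l <= N)%N -> has (fun z => z != 0) l -> Inv (fun z => z \in l).
    exact: IH.
  move=> hl.
  have [b0|b0] := eqVneq b 0.
    have hcr : has (fun z => z != 0) (c :: r) by move: hl; rewrite b0 eqxx.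
    apply: (Inv_span _ _ (IHl (c :: r) sl hcr)).
    + move=> z; rewrite inE => /orP [/eqP ->|zc]; first by rewrite b0; apply: ispan0.
      exact: ispan_gen.
    + by move=> z zc; apply: ispan_gen; rewrite inE zc orbT.
  have [hr|hr] := boolP (has (fun z => z != 0) r).
    have I1 : Inv (fun z => z \in r \/ z = b).
      have hbr : has (fun z => z != 0) (b :: r) by rewrite /= b0.
      apply: (Inv_eq _ _ (IHl (b :: r) sl hbr)).
      by move=> z; rewrite inE; split => [[zr|->]|/orP [/eqP ->|zr]]; auto; rewrite ?eqxx ?zr ?orbT.
    have I2 : Inv (fun z => z = b \/ z = c) by apply: Inv_pair.
    have I3 : Inv (fun z => z = c \/ z \in r).
      have hcr : has (fun z => z != 0) (c :: r) by rewrite /= hr orbT.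
      apply: (Inv_eq _ _ (IHl (c :: r) sl hcr)).
      by move=> z; rewrite inE; split => [[->|zr]|/orP [/eqP ->|zr]]; auto; rewrite ?eqxx ?zr ?orbT.
    apply: (Inv_eq _ _ (Prufer _ _ _ I1 I2 I3)) => z; rewrite !inE; split.
      by case/orP => [/eqP ->|/orP [/eqP ->|zr]]; auto.
    by case=> [zr|[->|->]]; rewrite ?eqxx ?zr ?orbT.
  apply: (Inv_span _ _ (Inv_pair b c b0)).
  + move=> z; rewrite !inE => /orP [/eqP ->|/orP [/eqP ->|zr]].
    * by apply: ispan_gen; left.
    * by apply: ispan_gen; right.
    * have -> : z = 0 by apply/eqP; move/hasPn: hr => /(_ z zr); rewrite negbK.
      exact: ispan0.
  + by move=> z [->|->]; apply: ispan_gen; rewrite !inE eqxx ?orbT.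
Qed.
End NF.

Arguments Inv {K}.

Section NF.
Variable K : fieldExtType rat.
Implicit Types x y z a b c t u : K.

Lemma Dchar a b t : b != 0 ->
  ideal_div (gen1 b) (gen2 a b) t <-> OK t /\ OK (t * (a / b)).
Proof.
move=> b0; split.
  move=> h; split.
    have [r [hr e]] : gen1 b (t * b).
      by apply: h; exists 0, 1; split; [exact: OK0|split; [exact: OK1|ring]].
    by have -> : t = r by apply: (mulIf b0).
  have [r [hr e]] : gen1 b (t * a).
    by apply: h; exists 1, 0; split; [exact: OK1|split; [exact: OK0|ring]].
  by rewrite mulrA e mulfK.
move=> [ht hta] y [r [s [hr [hs ->]]]].
exists (r * (t * (a / b)) + s * t); split.
  by apply: OK_add; apply: OK_mul.
have e : t * (a / b) * b = t * a by rewrite -mulrA divfK.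
have -> : (r * (t * (a / b)) + s * t) * b = r * (t * (a / b) * b) + s * t * b by ring.
rewrite e; ring.
Qed.

Lemma gen2_ideal a b : OK a -> OK b -> is_ideal (gen2 a b).
Proof.
move=> ha hb; split; [|split; [|split]].
- by move=> _ [r [s [hr [hs ->]]]]; apply: OK_add; apply: OK_mul.
- by exists 0, 0; split; [exact: OK0|split; [exact: OK0|ring]].
- move=> _ _ [r [s [hr [hs ->]]]] [r' [s' [hr' [hs' ->]]]].
  by exists (r + r'), (s + s'); split; [exact: OK_add|split; [exact: OK_add|ring]].
- move=> q _ hq [r [s [hr [hs ->]]]].
  by exists (q * r), (q * s); split; [exact: OK_mul|split; [exact: OK_mul|ring]].
Qed.

Lemma unit_gen1 c : OK c -> OK_unit c -> ideal_eq (gen1 c) (@OK K).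
Proof.
move=> hc [_ [d [hd e]]] y; split.
  by move=> [r [hr ->]]; apply: OK_mul.
by move=> hy; exists (y * d); split; [exact: OK_mul|rewrite -mulrA [d * c]mulrC e mulr1].
Qed.

Lemma gen1_unit c : OK c -> ideal_eq (gen1 c) (@OK K) -> OK_unit c.
Proof.
move=> hc e; split => //; have [r [hr e1]] := (proj2 (e 1)) (OK1 K).
by exists r; split => //; rewrite mulrC.
Qed.

Lemma Div x z : (forall t, Dx x t -> OK (z * t)) ->
  exists al be, OK al /\ OK be /\ z = al + be * x.
Proof.
move=> h.
have := inv1 K x (fun w => exists al be, OK al /\ OK be /\ z * w = al + be * x).
rewrite mulr1; apply.
- by exists 0, 0; split; [exact: OK0|split; [exact: OK0|ring]].
- move=> a b [al [be [h1 [h2 e1]]]] [al' [be' [h1' [h2' e2]]]].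
  exists (al + al'), (be + be'); split; [exact: OK_add|split; [exact: OK_add|]].
  by rewrite mulrDr e1 e2; ring.
- move=> r a hr [al [be [h1 [h2 e1]]]].
  exists (r * al), (r * be); split; [exact: OK_mul|split; [exact: OK_mul|]].
  by rewrite mulrCA e1; ring.
- move=> _ [t [m [Dt [[al [be [h1 [h2 ->]]]] ->]]]].
  exists (z * t * al), (z * t * be); split; [apply: OK_mul => //; exact: h|].
  split; [apply: OK_mul => //; exact: h|ring].
Qed.

Lemma unit_lemma x u : Mx x u -> Mx x (u * x) -> OK u.
Proof.
move=> [a [b [ha [hb eu]]]] [a' [b' [ha' [hb' eux]]]].
have := inv1 K x (fun w => OK (u * w)); rewrite mulr1; apply.
- by rewrite mulr0; exact: OK0.
- by move=> p q hp hq; rewrite mulrDr; exact: OK_add.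
- by move=> r p hr hp; rewrite mulrCA; exact: OK_mul.
- move=> _ [t [m [[ht htx] [[al [be [h1 [h2 ->]]]] ->]]]].
  have -> : u * (t * (al + be * x)) = al * (a * t + b * (t * x)) + be * (a' * t + b' * (t * x)).
    have e1 : a * t + b * (t * x) = t * u by rewrite eu; ring.
    have e2 : a' * t + b' * (t * x) = t * (u * x) by rewrite eux; ring.
    by rewrite e1 e2; ring.
  by apply: OK_add; apply: OK_mul => //; apply: OK_add; apply: OK_mul.
Qed.

Lemma ratio_OK a b a' b' : b != 0 -> b' != 0 -> a / b = a' / b' ->
  gen2 a' b' a -> gen2 a' b' b -> OK (b / b').
Proof.
move=> b0 b0' e [r [s [hr [hs ea]]]] [r' [s' [hr' [hs' eb]]]].
apply: (unit_lemma (a' / b')).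
  exists s', r'; split => //; split => //.
  by rewrite eb; field.
exists s, r; split => //; split => //.
have -> : b / b' * (a' / b') = a / b' by rewrite -e mulrC mulrA divfK.
by rewrite ea; field.
Qed.


Lemma in_h a1 b1 b2 (g2 : K -> Prop) : b1 != 0 -> b2 != 0 -> is_ideal g2 ->
  ideal_eq (ideal_div (gen1 b1) (gen2 a1 b1)) (ideal_div (gen1 b2) g2) ->
  forall y, g2 y -> exists al be, OK al /\ OK be /\ y = al * b2 + be * (b2 * (a1 / b1)).
Proof.
move=> b10 b20 gi hD y gy.
have hz : forall t, Dx (a1 / b1) t -> OK (y / b2 * t).
  move=> t Dt; have := proj1 (hD t) (proj2 (Dchar a1 b1 t b10) Dt) y gy.
  case=> r [hr e]; have -> : y / b2 * t = r by rewrite mulrAC [y * t]mulrC e mulfK.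
  exact: hr.
have [al [be [hal [hbe e]]]] := Div (a1 / b1) (y / b2) hz.
exists al, be; split => //; split => //.
by rewrite -(divfK b20 y) e; ring.
Qed.

Lemma g2_sup a1 b1 b2 (g2 : K -> Prop) : b1 != 0 -> b2 != 0 -> inseverable g2 ->
  ideal_eq (ideal_div (gen1 b1) (gen2 a1 b1)) (ideal_div (gen1 b2) g2) ->
  forall w, gen2 (b2 * (a1 / b1)) b2 w -> g2 w.
Proof.
move=> b10 b20 [gi [gnz _]] hD w [r [s [hr [hs ew]]]].
have [gOK [g0 [gD gM]]] := gi.
have [l [lg gl]] := fg K g2 gi gnz.
have hl : has (fun z => z != 0) l.
  apply/negPn/negP => /hasPn hl0.
  case: gnz => y [gy y0]; move/negP: y0; apply.
  apply/eqP; apply: (gl y gy (fun z => z = 0)) => //.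
  - by move=> a b -> ->; rewrite addr0.
  - by move=> q a _ ->; rewrite mulr0.
  - by move=> z zl; apply/eqP; have := hl0 z zl; rewrite negbK.
have [T [hT h1]] := Inv_list K l hl.
have hwt : forall t, T t -> OK (w * t).
  move=> t Tt.
  have tg : forall y, g2 y -> OK (y * t).
    move=> y gy; apply: (gl y gy (fun z => OK (z * t))).
    - by rewrite mul0r; exact: OK0.
    - by move=> a b ha hb; rewrite mulrDl; exact: OK_add.
    - by move=> q a hq ha; rewrite -mulrA; exact: OK_mul.
    - by move=> z zl; exact: hT.
  have : ideal_div (gen1 b1) (gen2 a1 b1) (b2 * t).
    apply: (proj2 (hD (b2 * t))) => y gy; exists (y * t); split; first exact: tg.
    by ring.
  case/(Dchar a1 b1 (b2 * t) b10) => h2 h3.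
  have -> : w * t = r * (b2 * t * (a1 / b1)) + s * (b2 * t) by rewrite ew; ring.
  by apply: OK_add; apply: OK_mul.
rewrite -[w]mulr1; apply: (h1 (fun z => g2 (w * z))).
- by rewrite mulr0.
- by move=> a b ha hb; rewrite mulrDr; exact: gD.
- by move=> q a hq ha; rewrite mulrCA; exact: gM.
- move=> _ [a [t [al [Tt ->]]]].
  have -> : w * (a * t) = (w * t) * a by ring.
  apply: gM; first exact: hwt.
  exact: lg.
Qed.
End NF.

Theorem proposition3p3 (K : fieldExtType rat) (a1 b1 b2 : K) :
  OK a1 -> OK b1 -> b1 != 0 -> ~ OK_unit b1 ->
  reduced_frac a1 b1 ->
  ~ principal (gen2 a1 b1) -> inseverable (gen2 a1 b1) ->
  OK b2 -> b2 != 0 -> ~ ideal_eq (gen1 b2) (gen1 b1) ->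
  ((exists a2 : K, OK a2 /\ a2 / b2 = a1 / b1 /\ reduced_frac a2 b2) <->
   (exists g2 : K -> Prop, inseverable g2 /\ ~ ideal_eq g2 (gen2 a1 b1) /\
      ideal_eq (ideal_div (gen1 b1) (gen2 a1 b1)) (ideal_div (gen1 b2) g2)))
  /\
  (forall g2 : K -> Prop, inseverable g2 -> ~ ideal_eq g2 (gen2 a1 b1) ->
      ideal_eq (ideal_div (gen1 b1) (gen2 a1 b1)) (ideal_div (gen1 b2) g2) ->
      same_class (gen2 a1 b1) g2).
Proof.
move=> ha1 hb1 b10 nu1 red1 np1 ins1 hb2 b20 nass.
have gen2l : forall a b : K, OK a -> OK b -> gen2 a b a.
  by move=> a b _ _; exists 1, 0; split; [exact: OK1|split; [exact: OK0|ring]].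
have gen2r : forall a b : K, OK a -> OK b -> gen2 a b b.
  by move=> a b _ _; exists 0, 1; split; [exact: OK0|split; [exact: OK1|ring]].
split; first split.
- case=> a2 [ha2 [ex red2]].
  exists (gen2 a2 b2); split; [|split].
  + split; first exact: gen2_ideal.
    split; first by exists b2; split => //; apply: gen2r.
    move=> c hc sub; apply: unit_gen1 => //; apply: NNPP => nu.
    case: red2 => _ /(_ c hc nu); apply.
      have [r [hr e]] := sub a2 (gen2l _ _ ha2 hb2).
      by exists r; split => //; rewrite e mulrC.
    have [r [hr e]] := sub b2 (gen2r _ _ ha2 hb2).
    by exists r; split => //; rewrite e mulrC.
  + move=> e; apply: nass.
    have u1 : OK (b1 / b2).
      apply: (ratio_OK K a1 b1 a2 b2 b10 b20 (esym ex)).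
        exact: (proj2 (e a1) (gen2l _ _ ha1 hb1)).
      exact: (proj2 (e b1) (gen2r _ _ ha1 hb1)).
    have u2 : OK (b2 / b1).
      apply: (ratio_OK K a2 b2 a1 b1 b20 b10 ex).
        exact: (proj1 (e a2) (gen2l _ _ ha2 hb2)).
      exact: (proj1 (e b2) (gen2r _ _ ha2 hb2)).
    move=> y; split; case=> r [hr ->].
      by exists (r * (b2 / b1)); split; [exact: OK_mul|rewrite -mulrA divfK].
    by exists (r * (b1 / b2)); split; [exact: OK_mul|rewrite -mulrA divfK].
  + move=> t; split.
      by move/(Dchar K a1 b1 t b10) => [h1 h2]; apply/(Dchar K a2 b2 t b20); rewrite ex.
    by move/(Dchar K a2 b2 t b20) => [h1 h2]; apply/(Dchar K a1 b1 t b10); rewrite -ex.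
- case=> g2 [ins2 [ne hD]].
  have [gi [gnz hins]] := ins2.
  have [gOK _] := gi.
  set a2 := b2 * (a1 / b1).
  have b2D : ideal_div (gen1 b2) g2 b2.
    by move=> y gy; exists y; split; [exact: gOK|rewrite mulrC].
  have ha2 : OK a2 by have := proj2 (hD b2) b2D => /(Dchar K a1 b1 b2 b10) [].
  exists a2; split => //; split; first by rewrite /a2 mulrAC mulfV // mul1r.
  split => // d hd nud [k1 [hk1 e1]] [k2 [hk2 e2]].
  apply: nud; apply: gen1_unit => //.
  apply: hins => // y gy.
  have [al [be [hal [hbe ey]]]] := in_h K a1 b1 b2 g2 b10 b20 gi hD y gy.
  exists (al * k2 + be * k1); split.
    by apply: OK_add; apply: OK_mul.
  by rewrite ey -/a2 e1 e2; ring.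
- move=> g2 ins2 ne hD.
  have [gi [gnz hins]] := ins2.
  have sup := g2_sup K a1 b1 b2 g2 b10 b20 ins2 hD.
  have sub := in_h K a1 b1 b2 g2 b10 b20 gi hD.
  exists b2, b1; do 4 (split => //).
  move=> z; split.
    case=> y [[r [s [hr [hs ->]]]] ->].
    exists (r * (b2 * (a1 / b1)) + s * b2); split; last by field.
    by apply: sup; exists r, s.
  case=> y [gy ->]; have [al [be [hal [hbe ey]]]] := sub y gy.
  exists (be * a1 + al * b1); split; last by rewrite ey; field.
  by exists be, al.
Qed.
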